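(* Let $n\geq 0$ and $0\leq l\leq n$ be integers. Then, as an identity of rational functions in $q,z,x$, \[ \sum_{k=0}^{n}{n\brack k}\frac{(q/z;q)_k (zq^{-l};q)_{n-k}}{1-xq^k}z^k =\frac{(q;q)_n(xz;q)_{n-l}(zq^{-l};q)_l}{(x;q)_{n+1}}. \]
   Context: For $N\geq 0$, $(x;q)_N=(1-x)(1-xq)\cdots(1-xq^{N-1})$ (with $(x;q)_0=1$). The $q$-binomial coefficient is ${n\brack k}=\frac{(q;q)_n}{(q;q)_k(q;q)_{n-k}}$ for $0\leq k\leq n$ and $0$ otherwise. *)

(* Defs.v *)
From HB Require Import structures.
From mathcomp Require Import all_boot all_order all_algebra.
Set Implicit Arguments. Unset Strict Implicit. Unset Printing Implicit Defensive.
Import GRing.Theory.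
Local Open Scope ring_scope.

Definition qpoch (F : fieldType) (x q : F) (N : nat) : F :=
  \prod_(i < N) (1 - x * q ^+ i).

Definition qbinom (F : fieldType) (q : F) (n k : nat) : F :=
  if (k <= n)%N then qpoch q q n / (qpoch q q k * qpoch q q (n - k)) else 0.

(* Main.v *)
Require Import Defs.
From HB Require Import structures.
From mathcomp Require Import all_boot all_order all_algebra ring zify.
Import GRing.Theory.
Local Open Scope ring_scope.

Lemma qpoch_add (F : fieldType) (a q : F) m k :
  qpoch a q (m + k) = qpoch a q m * qpoch (a * q ^+ m) q k.
Proof.
rewrite /qpoch big_split_ord /=; congr (_ * _).
by apply: eq_bigr => i _; rewrite exprD mulrA.
Qed.

Lemma qpoch_nz_l (F : fieldType) (a q : F) m n :
  (m <= n)%N -> qpoch a q n != 0 -> qpoch a q m != 0.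
Proof.
move=> hmn; rewrite -(subnKC hmn) qpoch_add mulf_eq0 negb_or.
by case/andP.
Qed.

Lemma qpoch_nz_r (F : fieldType) (a q : F) m n :
  (m <= n)%N -> qpoch a q n != 0 -> qpoch (a * q ^+ m) q (n - m) != 0.
Proof.
move=> hmn; rewrite -{1}(subnKC hmn) qpoch_add mulf_eq0 negb_or.
by case/andP.
Qed.

Lemma qpoch_rev (F : fieldType) (c q : F) m : q != 0 ->
  qpoch (c * q^-1 ^+ m) q m = \prod_(i < m) (1 - c * q^-1 ^+ i.+1).
Proof.
move=> hq; rewrite /qpoch -(big_mkord xpredT (fun i => 1 - c * q^-1 ^+ i.+1)).
rewrite big_rev_mkord subn0; apply: eq_bigr => i _.
have hi := ltn_ord i.
congr (1 - _); rewrite -mulrA; congr (_ * _).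
by rewrite subnSK // -{1}(subnK (ltnW hi)) exprD -mulrA -exprMn mulVf // expr1n mulr1.
Qed.

Lemma factA (F : fieldType) (q z : F) m : q != 0 -> z != 0 ->
  qpoch (q / z) q m * z ^+ m * qpoch (q^-1 ^+ m) q m
  = qpoch q q m * qpoch (z * q^-1 ^+ m) q m.
Proof.
move=> hq hz.
have h1 := @qpoch_rev _ 1 q m hq; rewrite mul1r in h1.
have -> : z ^+ m = \prod_(i < m) z by rewrite prodr_const card_ord.
rewrite h1 qpoch_rev // /qpoch -!big_split /=.
apply: eq_bigr => i _.
have ht : q * q ^+ i != 0 by rewrite mulf_neq0 // expf_neq0.
rewrite mul1r exprVn exprS.
field; rewrite ?hq ?hz ?expf_neq0 //.
Qed.

Lemma wshift (F : fieldType) (q z : F) m l : q != 0 -> (m <= l)%N ->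
  z * q^-1 ^+ l * q ^+ (l - m) = z * q^-1 ^+ m.
Proof.
move=> hq hml; rewrite -{1}(subnKC hml) exprD -!mulrA; congr (_ * _).
by rewrite -exprMn mulVf // expr1n mulr1.
Qed.

Lemma factB (F : fieldType) (q z : F) n m l : q != 0 -> (l <= n)%N -> (m <= n)%N ->
  qpoch (z * q^-1 ^+ m) q m * qpoch (z * q^-1 ^+ l) q (n - m)
  = qpoch (z * q^-1 ^+ m) q (n - l) * qpoch (z * q^-1 ^+ l) q l.
Proof.
move=> hq hl hm; case: (leqP m l) => hml.
- have e1 : (n - m = (l - m) + (n - l))%N by lia.
  have e2 : (l = (l - m) + m)%N by lia.
  have -> : qpoch (z * q^-1 ^+ l) q l = qpoch (z * q^-1 ^+ l) q ((l - m) + m) by rewrite -e2.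
  rewrite e1 !qpoch_add !wshift //.
  by rewrite mulrCA [RHS]mulrCA [qpoch _ _ (n - l) * _]mulrC.
- have e1 : (n - l = (m - l) + (n - m))%N by lia.
  have e2 : (m = (m - l) + l)%N by lia.
  have -> : qpoch (z * q^-1 ^+ m) q m = qpoch (z * q^-1 ^+ m) q ((m - l) + l) by rewrite -e2.
  rewrite e1 !qpoch_add (wshift _ q z l m hq (ltnW hml)) //.
  by rewrite mulrAC.
Qed.

Lemma Dsplit (F : fieldType) (q : F) n m : q != 0 -> (m < n.+1)%N ->
  \prod_(j < n.+1 | (j : nat) != m) (1 - q ^+ j * q^-1 ^+ m)
  = qpoch (q^-1 ^+ m) q m * qpoch q q (n - m).
Proof.
move=> hq hm.
rewrite big_mkcond /= -(big_mkord xpredT (fun j => if j != m then 1 - q ^+ j * q^-1 ^+ m else 1)).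
rewrite (big_cat_nat (leq0n m) (ltnW hm)) /= [X in _ * X]big_ltn // eqxx mul1r.
rewrite /qpoch; congr (_ * _).
  rewrite big_mkord; apply: eq_bigr => i _; rewrite (ltn_eqF (ltn_ord i)) mulrC //.
rewrite -{1}[m.+1]add0n big_addn subSS big_mkord.
apply: eq_bigr => i _.
have -> : ((i + m.+1)%N != m) by rewrite addnS eq_sym ltn_eqF // ltnS leq_addl.
by rewrite addnS exprS exprD -!mulrA -exprMn mulfV // expr1n mulr1.
Qed.

Lemma keyid (F : fieldType) (q z : F) n m l : q != 0 -> z != 0 ->
  qpoch q q n != 0 -> (l <= n)%N -> (m <= n)%N ->
  qbinom q n m * (qpoch (q / z) q m * qpoch (z * q ^- l) q (n - m)) * z ^+ m
   * (qpoch (q^-1 ^+ m) q m * qpoch q q (n - m))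
  = qpoch q q n * qpoch (z * q^-1 ^+ m) q (n - l) * qpoch (z * q ^- l) q l.
Proof.
move=> hq hz hqq hl hm.
have hQm : qpoch q q m != 0 by apply: qpoch_nz_l hm hqq.
have hQnm : qpoch q q (n - m) != 0 by apply: qpoch_nz_l (leq_subr m n) hqq.
have hA := factA _ q z m hq hz.
have hB := factB _ q z n m l hq hl hm.
rewrite -exprVn /qbinom hm -[RHS]mulrA -hB.
move: hA hQm hQnm.
set A := qpoch (q / z) q m; set C := qpoch (q^-1 ^+ m) q m.
set E := qpoch (z * q^-1 ^+ m) q m; set B := qpoch (z * q^-1 ^+ l) q (n - m).
set Qm := qpoch q q m; set Qnm := qpoch q q (n - m); set N := qpoch q q n.
move=> hA hQm hQnm.
have -> : E = A * z ^+ m * C / Qm by rewrite hA mulrC mulKf.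
field; by rewrite hQm hQnm.
Qed.

Lemma size_lin (F : fieldType) (c : F) : (size (1 - c%:P * 'X)%R <= 2)%N.
Proof.
apply: leq_trans (size_polyD _ _) _; rewrite size_polyN size_poly1 geq_max /=.
by rewrite mul_polyC (leq_trans (size_scale_leq _ _)) // size_polyX.
Qed.

Lemma size_linprod (F : fieldType) (I : finType) (P : pred I) (a : I -> F) :
  (size (\prod_(i | P i) (1 - (a i)%:P * 'X))%R <= #|P|.+1)%N.
Proof.
apply: leq_trans (size_poly_prod_leq _ _) _.
have h : (\sum_(i | P i) size (1 - (a i)%:P * 'X)%R <= \sum_(i | P i) 2)%N.
  by apply: leq_sum => i _; apply: size_lin.
have e : (\sum_(i | P i) 2 = #|P| * 2)%N by rewrite -sum_nat_const.
rewrite e in h; lia.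
Qed.

Lemma qpow_neq1 (F : fieldType) (q : F) n d : (0 < d)%N -> (d <= n)%N ->
  qpoch q q n != 0 -> q ^+ d != 1.
Proof.
move=> hd hdn hqq; apply/eqP => e; move/eqP: hqq; apply.
have hi : (d.-1 < n)%N by rewrite prednK.
by rewrite /qpoch (bigD1 (Ordinal hi)) //= -exprS prednK // e subrr mul0r.
Qed.

Theorem lemma2p1 (F : fieldType) (n l : nat) (q z x : F)
  (hl : (l <= n)%N)
  (hq : q != 0) (hz : z != 0)
  (hqq : qpoch q q n != 0)
  (hx : qpoch x q n.+1 != 0) :
  \sum_(0 <= k < n.+1)
     qbinom q n k * (qpoch (q / z) q k * qpoch (z * q ^- l) q (n - k))
       / (1 - x * q ^+ k) * z ^+ k
  = qpoch q q n * qpoch (x * z) q (n - l) * qpoch (z * q ^- l) q l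
      / qpoch x q n.+1.
Proof.
pose c (k : nat) := qbinom q n k * (qpoch (q / z) q k * qpoch (z * q ^- l) q (n - k)) * z ^+ k.
pose d (k : 'I_n.+1) : {poly F} := \prod_(j < n.+1 | j != k) (1 - (q ^+ j)%:P * 'X).
pose Q : {poly F} := \sum_(k < n.+1) c k *: d k.
pose K := qpoch q q n * qpoch (z * q ^- l) q l.
pose R : {poly F} := K *: \prod_(i < n - l | true) (1 - (z * q ^+ i)%:P * 'X).
have hd : forall k y, (d k).[y] = \prod_(j < n.+1 | j != k) (1 - q ^+ j * y).
  by move=> k y; rewrite /d horner_prod; apply: eq_bigr => j _; rewrite !hornerE.
have hQ : forall y, Q.[y] = \sum_(k < n.+1) c k * (d k).[y].
  by move=> y; rewrite /Q horner_sum; apply: eq_bigr => k _; rewrite hornerZ.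
have hR : forall y, R.[y] = K * \prod_(i < n - l) (1 - z * q ^+ i * y).
  by move=> y; rewrite /R hornerZ horner_prod; congr (_ * _); apply: eq_bigr => j _; rewrite !hornerE.
have hQR : Q = R.
  apply/eqP; rewrite -subr_eq0; apply/negPn/negP => hne.
  pose rs := [seq q^-1 ^+ (val i) | i <- enum 'I_n.+1].
  have hroot : all (root (Q - R)) rs.
    apply/allP => y /mapP [i _ ->]; rewrite rootE hornerD hornerN hQ hR subr_eq0.
    rewrite (bigD1 i) //= big1 ?addr0.
      have eD : \prod_(j < n.+1 | j != i) (1 - q ^+ j * q^-1 ^+ i)
          = qpoch (q^-1 ^+ i) q i * qpoch q q (n - i) by exact: (Dsplit _ q n i hq (ltn_ord i)).
      rewrite hd eD; apply/eqP.
      rewrite /c (keyid _ q z n i l hq hz hqq hl (ltn_ord i)) /K mulrAC; congr (_ * _).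
      rewrite /qpoch; apply: eq_bigr => t _; by rewrite mulrAC.
    move=> k hk; rewrite hd (bigD1 i) ?(eq_sym i k) //=.
    by rewrite -exprMn mulfV // expr1n subrr mul0r mulr0.
  have huniq : uniq rs.
    rewrite map_inj_uniq ?enum_uniq // => i j e.
    apply: val_inj; move: e; rewrite !exprVn => /invr_inj e.
    have hpos : forall a b : nat, (a < b <= n)%N -> q ^+ a = q ^+ b -> False.
      move=> a b /andP [hab hb] eab.
      have : q ^+ (b - a) == 1.
        apply/eqP; apply: (mulfI (expf_neq0 a hq)).
        by rewrite -exprD (subnKC (ltnW hab)) mulr1 eab.
      by apply/negP; apply: qpow_neq1 hqq; rewrite ?subn_gt0 // (leq_trans (leq_subr _ _)).
    case: (ltngtP i j) => // hij.
      by exfalso; apply: (hpos i j) => //; rewrite hij -ltnS ltn_ord.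
    by exfalso; apply: (hpos j i) => //; rewrite hij -ltnS ltn_ord.
  have := max_poly_roots hne hroot huniq.
  rewrite size_map size_enum_ord ltnNge; apply/negP/negPn.
  apply: leq_trans (size_polyD _ _) _; rewrite size_polyN geq_max; apply/andP; split.
    apply: leq_trans (size_sum _ _ _) _; apply/bigmax_leqP => k _.
    apply: leq_trans (size_scale_leq _ _) _.
    rewrite /d; apply: leq_trans (size_linprod _ _ (fun j : 'I_n.+1 => j != k) (fun j : 'I_n.+1 => q ^+ j)) _.
    move: (cardC1 k); rewrite card_ord /= => hc.
    exact: (eq_leq hc).
  rewrite /R; apply: leq_trans (size_scale_leq _ _) _.
  apply: leq_trans (size_linprod _ _ (fun j : 'I_(n - l) => true) (fun j : 'I_(n - l) => z * q ^+ j)) _.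
  rewrite ltnS; apply: leq_trans (max_card _) _; rewrite card_ord leq_subr //.
have eR : qpoch q q n * qpoch (x * z) q (n - l) * qpoch (z * q ^- l) q l = R.[x].
  rewrite hR /K mulrAC; congr (_ * _); rewrite /qpoch; apply: eq_bigr => i _.
  by congr (1 - _); rewrite [RHS]mulrC mulrA.
rewrite eR -hQR hQ big_mkord mulr_suml; apply: eq_bigr => k _.
have eX : qpoch x q n.+1 = (1 - x * q ^+ k) * (d k).[x].
  rewrite hd /qpoch (bigD1 k) //=; congr (_ * _); apply: eq_bigr => j _.
  by rewrite mulrC.
have : qpoch x q n.+1 != 0 := hx.
rewrite eX mulf_eq0 negb_or => /andP [h1 h2].
rewrite /c; field; by rewrite h1 h2.
Qed.
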